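(* Let $G$ be an undirected unweighted graph on $n\ge 2$ vertices with strong connectivity $k\ge 1$ such that no vertex-induced subgraph of $G$ has strong connectivity at least $2k$. Then $G$ has $\Theta(nk)$ edges, i.e. there are absolute constants $a,b>0$ with $ank\le |E(G)|\le bnk$.
   Context: The strong connectivity of a graph is the size of its minimum cut (the minimum, over $\emptyset\ne S\subsetneq V$, of the number of edges between $S$ and $V\setminus S$); a graph is strongly $k$-connected if it has no cut of size less than $k$. Subgraphs considered are vertex-induced subgraphs on at least two vertices. *)

(* Defs.v *)
From mathcomp Require Import all_boot all_order all_algebra.
Set Implicit Arguments. Unset Strict Implicit. Unset Printing Implicit Defensive.

Definition simple_graph (T : finType) (e : rel T) : Prop :=
  symmetric e /\ irreflexive e.

Definition edges (T : finType) (e : rel T) : {set {set T}} :=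
  [set A : {set T} | [exists x, exists y, (x != y) && e x y && (A == [set x; y])]].

(* Number of edges of the subgraph induced on U between S and U \ S
   (counted as ordered pairs (x,y), x in S, y in U\S; for a symmetric
   relation this counts each such undirected edge exactly once). *)
Definition cut_size (T : finType) (e : rel T) (U S : {set T}) : nat :=
  #|[set p : T * T | (p.1 \in S) && (p.2 \in U :\: S) && e p.1 p.2]|.

Definition strongly_conn (T : finType) (e : rel T) (U : {set T}) (k : nat) : bool :=
  [forall S : {set T}, ((S \subset U) && (S != set0) && (S != U)) ==> (k <= cut_size e U S)].

Definition strong_connectivity_is (T : finType) (e : rel T) (U : {set T}) (c : nat) : bool :=
  strongly_conn e U c && ~~ strongly_conn e U c.+1.

(* Main.v *)
Require Import Defs.
From mathcomp Require Import all_boot all_order all_algebra.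
From mathcomp Require Import zify.
From mathcomp Require Import lra.
Import GRing.Theory Num.Theory.

Section G.
Variables (T : finType) (e : rel T).
Hypothesis esym : symmetric e.
Hypothesis eirr : irreflexive e.

Definition PP (U : {set T}) := (\sum_(x in U) \sum_(y in U) (e x y : nat))%N.

Lemma card_pairs (A B : {set T}) :
  #|[set p : T * T | (p.1 \in A) && (p.2 \in B) && e p.1 p.2]| =
  (\sum_(x in A) \sum_(y in B) (e x y : nat))%N.
Proof.
rewrite -sum1_card big_mkcond /=.
transitivity (\sum_(p : T * T) (if (p.1 \in A) && (p.2 \in B) && e p.1 p.2 then 1 else 0))%N.
  by apply: eq_bigr => p _; rewrite inE.
rewrite -(pair_bigA _ (fun x y => if (x \in A) && (y \in B) && e x y then 1 else 0)%N) /=.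
rewrite [RHS]big_mkcond; apply: eq_bigr => x _.
case: (boolP (x \in A)) => xA /=.
  rewrite [RHS]big_mkcond; apply: eq_bigr => y _; by case: (y \in B); case: (e x y).
by rewrite big1.
Qed.

Lemma PP_split (U S : {set T}) : S \subset U ->
  PP U = (PP S + PP (U :\: S) + 2 * cut_size e U S)%N.
Proof.
move=> sSU; rewrite /PP /cut_size card_pairs.
rewrite (big_setID S) /= (setIidPr sSU).
have h : forall x, (\sum_(y in U) (e x y : nat) =
   \sum_(y in S) (e x y : nat) + \sum_(y in U :\: S) (e x y : nat))%N.
  by move=> x; rewrite (big_setID S) /= (setIidPr sSU).
rewrite (eq_bigr _ (fun x _ => h x)) big_split /=.
rewrite [X in (_ + X)%N](eq_bigr _ (fun x _ => h x)) big_split /=.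
rewrite [X in (_ + (X + _))%N]exchange_big /=.
rewrite [X in (_ + (X + _))%N](eq_bigr (fun y => \sum_(x in U :\: S) (e y x : nat))%N); last first.
  by move=> y _; apply: eq_bigr => x _; rewrite esym.
lia.
Qed.

Lemma PP_bound (c : nat) : (forall U : {set T}, (2 <= #|U|)%N ->
   exists S : {set T}, [/\ S \subset U, S != set0, S != U & (cut_size e U S <= c)%N]) ->
  forall U : {set T}, U != set0 -> (PP U + 2 * c <= 2 * c * #|U|)%N.
Proof.
move=> hc U; have [n] := ubnP #|U|; elim: n U => // n IHn U /ltnSE hUn U0.
have IH : forall V : {set T}, (#|V| < #|U|)%N -> V != set0 -> (PP V + 2 * c <= 2 * c * #|V|)%N.
  by move=> V hV; apply: IHn; exact: leq_trans hV hUn.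
case: (leqP 2 #|U|) => hU.
  have [S [sSU S0 SU cS]] := hc U hU.
  rewrite (PP_split _ _ sSU).
  have hS : (#|S| < #|U|)%N by rewrite proper_card // properEneq SU.
  have hD : (#|U :\: S| < #|U|)%N.
    rewrite proper_card // properEneq subsetDl andbT.
    apply/eqP => h; move/negP: S0; apply; apply/eqP/setP => x.
    rewrite inE; apply/negbTE/negP => xS.
    have : x \in U :\: S by rewrite h (subsetP sSU).
    by rewrite inE xS.
  have D0 : U :\: S != set0.
    by rewrite setD_eq0; apply: contra SU => sUS; rewrite eqEsubset sSU sUS.
  have := IH _ hS S0; have := IH _ hD D0.
  have := cardsD U S; rewrite (setIidPr sSU).
  have := subset_leq_card sSU.
  lia.
have h1 : #|U| == 1%N by rewrite eqn_leq -ltnS hU card_gt0 U0.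
have [x ->] := cards1P h1.
by rewrite /PP !big_set1 eirr cards1 /= muln1.
Qed.
End G.
Arguments PP {T} e U.
Arguments card_pairs {T} e A B.
Arguments PP_bound {T e} esym eirr c.

Lemma inj2 (T : finType) (a b c d : T) : a != b -> (enum_rank b <= enum_rank a)%N ->
  (enum_rank d <= enum_rank c)%N -> [set a; b] = [set c; d] -> a = c /\ b = d.
Proof.
move=> ab rba rdc h.
have ha : a \in [set c; d] by rewrite -h set21.
have hb : b \in [set c; d] by rewrite -h set22.
have hc : c \in [set a; b] by rewrite h set21.
move: ha hb hc; rewrite !inE => /orP[/eqP ac|/eqP ad] /orP[/eqP bc|/eqP bd] /orP[/eqP ca|/eqP cb]; subst => //; try by rewrite eqxx in ab.
have /eqP : enum_rank c == enum_rank d by rewrite -val_eqE eqn_leq rba rdc.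
by move/enum_rank_inj => cd; rewrite cd eqxx in ab.
Qed.

Local Open Scope ring_scope.

Theorem mainTheorem11 :
  exists a b : rat, 0 < a /\ 0 < b /\
  forall (T : finType) (e : rel T) (k : nat),
    simple_graph e ->
    (2 <= #|T|)%N ->
    (1 <= k)%N ->
    strong_connectivity_is e [set: T] k ->
    (forall U : {set T}, (2 <= #|U|)%N -> ~~ strongly_conn e U (2 * k)) ->
    a * (#|T| * k)%:R <= (#|edges e|)%:R /\ (#|edges e|)%:R <= b * (#|T| * k)%:R.
Proof.
exists (1/2), 4; split; first by []. split; first by [].
move=> T e k [esym eirr] hT hk /andP[hsc _] hno.
pose X := [set p : T * T | (p.1 \in [set: T]) && (p.2 \in [set: T]) && e p.1 p.2].
pose f := fun p : T * T => [set p.1; p.2].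
have hX : #|X| = PP e [set: T] by rewrite /X card_pairs.
have sub : forall Y : {set T * T}, Y \subset X -> {in Y &, injective f} -> (#|Y| <= #|edges e|)%N.
  move=> Y sYX inj; rewrite -(card_in_imset inj); apply: subset_leq_card.
  apply/subsetP => A /imsetP [[x y] xyY ->]; rewrite /edges inE.
  have := subsetP sYX _ xyY; rewrite !inE /= => exy.
  apply/existsP; exists x; apply/existsP; exists y; rewrite exy eqxx !andbT /=.
  by apply: contraTneq exy => ->; rewrite eirr.
have low : (#|T| * k <= 2 * #|edges e|)%N.
  pose B := [set p : T * T | (enum_rank p.1 < enum_rank p.2)%N].
  have h1 : (#|X :&: B| <= #|edges e|)%N.
    apply: sub; first exact: subsetIl.
    move=> [a b] [c d]; rewrite !inE /= => /andP[eab rab] /andP[ecd rcd] hf.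
    have ab : b != a by apply: contraTneq eab => ->; rewrite eirr.
    have [-> ->] := @inj2 _ _ _ _ _ ab (ltnW rab) (ltnW rcd) (etrans (setUC _ _) (etrans hf (setUC _ _))).
    by [].
  have h2 : (#|X :\: B| <= #|edges e|)%N.
    apply: sub; first exact: subsetDl.
    move=> [a b] [c d]; rewrite !inE /= -!leqNgt => /andP[rab eab] /andP[rcd ecd] hf.
    have ab : a != b by apply: contraTneq eab => ->; rewrite eirr.
    by have [-> ->] := @inj2 _ _ _ _ _ ab rab rcd hf.
  have hXc := cardsID B X.
  suff : (#|T| * k <= #|X|)%N by lia.
  rewrite hX /PP -cardsT -sum_nat_const; apply: leq_sum => x _.
  have hx : [set x] != [set: T].
    apply: contraTneq hT => h; by rewrite -cardsT -h cards1.
  have := forallP hsc [set x]; rewrite subsetT /= -card_gt0 cards1 hx /= => hk'.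
  apply: (leq_trans hk'); rewrite /cut_size card_pairs big_set1.
  by rewrite [X in (_ <= X)%N](big_setID [set x]) /= leq_addl.
have up : (#|edges e| <= 4 * (#|T| * k))%N.
  have hb := PP_bound esym eirr ((2 * k).-1).
  have : (PP e [set: T] + 2 * (2 * k).-1 <= 2 * (2 * k).-1 * #|[set: T]|)%N.
    apply: hb; last by rewrite -card_gt0 cardsT; lia.
    move=> U hU; have := hno U hU; move/forallPn => [S].
    rewrite negb_imply => /andP[/andP[/andP[s1 s2] s3] s4].
    by exists S; split => //; rewrite -ltnS prednK ?muln_gt0 // ltnNge.
  rewrite cardsT -hX.
  have : (#|edges e| <= #|X|)%N.
    apply: (leq_trans _ (leq_imset_card f X)); apply: subset_leq_card; apply/subsetP => A.
    rewrite inE => /existsP[x /existsP[y /andP[/andP[_ exy] /eqP ->]]].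
    by apply/imsetP; exists (x, y); rewrite // !inE.
  lia.
split.
  have : (#|T| * k)%:R <= 2 * (#|edges e|)%:R :> rat.
    by rewrite -natrM ler_nat.
  lra.
have : (#|edges e|)%:R <= 4 * (#|T| * k)%:R :> rat.
  by rewrite -natrM ler_nat.
lra.
Qed.
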